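(* Let $\mathbb{F}^E_m$ be a floating-point format and $\mathrm{fl}:\mathbb{R}\to\mathbb{F}^E_m\cup\{-\infty,+\infty\}$ its rounding function in round-to-nearest-even mode. For any integer $\ell\in[0,2^{E-1}-2]$, the ratio $|\{\mathrm{fl}(i/2^\ell):i\in\{0,1,\ldots,2^\ell-1\}\}|\,/\,|\mathbb{F}^E_m\cap[0,1]|$ equals $\frac{2^\ell}{2^m(2^{E-1}-1)+1}$ if $\ell\le m+1$, and $\frac{2^m(\ell-m+1)+1}{2^m(2^{E-1}-1)+1}$ if $\ell>m+1$. The same holds for the set $\{\mathrm{fl}(\mathrm{fl}(i)/\mathrm{fl}(2^\ell)):i\in\{0,1,\ldots,2^\ell-1\}\}$.
   Context: $\mathbb{F}^E_m$ ($E\ge1$ exponent bits, $m\ge1$ mantissa bits, bias $b_E=2^{E-1}-1$) is regarded as a set of real numbers: with $e\in\{0,\dots,2^E-2\}$ and $f_1,\ldots,f_m\in\{0,1\}$, the finite values are $\pm(0.f_1\ldots f_m)_2\,2^{1-b_E}$ (for $e=0$, subnormals and zero) and $\pm(1.f_1\ldots f_m)_2\,2^{e-b_E}$ (for $1\le e\le 2^E-2$); $\mathbb{F}^E_m\cap[0,1]$ is the set of such values in $[0,1]$ (zero counted once). Round-to-nearest-even maps a real to the nearest element of $\mathbb{F}^E_m$, breaking ties toward the value with even last mantissa bit. *)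

(* Defs.v *)
From HB Require Import structures.
From mathcomp Require Import all_boot all_order all_algebra.
From mathcomp Require Import reals constructive_ereal.
Unset Printing Implicit Defensive.
Import Order.TTheory GRing.Theory Num.Theory.
Local Open Scope ring_scope.

Definition bias (E : nat) : nat := (2 ^ (E - 1) - 1)%N.

(* an encoding (sign s, biased exponent e, mantissa field f), where
   f = (f_1 ... f_m)_2 is the integer whose binary digits are the mantissa bits *)
Definition frep := (bool * nat * nat)%type.

(* all encodings of finite values: e in {0,...,2^E-2}, f in {0,...,2^m-1} *)
Definition reps (E m : nat) : seq frep :=
  [seq (se.1, se.2, f) | se <- [seq (s, e) | s <- [:: false; true], e <- iota 0 (2 ^ E - 1)],
                         f <- iota 0 (2 ^ m)].

Definition fval (R : realType) (E m : nat) (r : frep) : R :=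
  let: (s, e, f) := r in
  (-1) ^+ s *
  (if e == 0%N then (f%:R / 2 ^+ m) * 2 / 2 ^+ bias E            (* (0.f)_2 2^(1-b) *)
   else (1 + f%:R / 2 ^+ m) * 2 ^+ e / 2 ^+ bias E).              (* (1.f)_2 2^(e-b) *)

Definition fmt (R : realType) (E m : nat) : seq R := [seq fval R E m r | r <- reps E m].

Definition fmt01 (R : realType) (E m : nat) : seq R :=
  undup [seq x <- fmt R E m | (0 <= x) && (x <= 1)].

Definition even_last (r : frep) : bool := ~~ odd r.2.

Definition rne_ok (R : realType) (E m : nat) (x : R) (r : frep) : bool :=
  all (fun r' => `|x - fval R E m r| <= `|x - fval R E m r'|) (reps E m) &&
  all (fun r' => (`|x - fval R E m r'| == `|x - fval R E m r|) ==>
                   ((fval R E m r' == fval R E m r) || even_last r)) (reps E m).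

(* IEEE overflow threshold for round-to-nearest: (2 - 2^(-m-1)) * 2^emax, emax = b_E *)
Definition ovf_thr (R : realType) (E m : nat) : R :=
  (2 - 2 ^- m.+1) * 2 ^+ bias E.

Definition fl (R : realType) (E m : nat) (x : R) : \bar R :=
  if ovf_thr R E m <= x then +oo%E
  else if x <= - ovf_thr R E m then -oo%E
  else let rs := reps E m in
       let i := find (rne_ok R E m x) rs in
       if (i < size rs)%N then (fval R E m (nth (false, 0%N, 0%N) rs i))%:E
       else +oo%E.

(* floating-point division: fl of the exact quotient of finite operands.
   (Non-finite operands never occur in the statement; they get an arbitrary value.) *)
Definition fdiv (R : realType) (E m : nat) (a b : \bar R) : \bar R :=
  match a, b with
  | EFin x, EFin y => fl R E m (x / y)
  | _, _ => +oo%E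
  end.

(* Main.v *)
Require Import Defs.
From HB Require Import structures.
From mathcomp Require Import all_boot all_order all_algebra.
From mathcomp Require Import reals constructive_ereal.
From mathcomp Require Import zify ring lra.

Set Implicit Arguments.
Local Open Scope nat_scope.

Definition nv (m e f : nat) : nat := if e == 0 then f else (2 ^ m + f) * 2 ^ (e - 1).
Definition psi (m j : nat) : nat := nv m (j %/ 2 ^ m) (j %% 2 ^ m).
Definition dist (a b : nat) : nat := (a - b) + (b - a).

Lemma pow_gt0' m : 0 < 2 ^ m. Proof. by rewrite expn_gt0. Qed.

Lemma psiE m e f : f < 2 ^ m -> psi m (e * 2 ^ m + f) = nv m e f.
Proof.
move=> hf; rewrite /psi divnMDl ?pow_gt0' // modnMDl divn_small // modn_small //.
by rewrite addn0.
Qed.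

Lemma psi_dec m j : j = (j %/ 2 ^ m) * 2 ^ m + j %% 2 ^ m /\ j %% 2 ^ m < 2 ^ m.
Proof. by split; [apply: divn_eq | apply: ltn_pmod; apply: pow_gt0']. Qed.

Lemma psi_small m j : j < 2 ^ m.+1 -> psi m j = j.
Proof.
move=> hj; case: (ltnP j (2 ^ m)) => h.
  have -> : j = 0 * 2 ^ m + j by rewrite mul0n.
  by rewrite psiE.
have -> : j = 1 * 2 ^ m + (j - 2 ^ m) by lia.
rewrite psiE /nv /=; first by rewrite expn0 muln1; lia.
rewrite expnS in hj; lia.
Qed.

Lemma psi_succ m j : psi m j < psi m j.+1.
Proof.
have [hd hr] := psi_dec m j.
set e := j %/ 2 ^ m in hd *; set f := j %% 2 ^ m in hd hr *.
have hp := pow_gt0' m.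
case: (ltnP f.+1 (2 ^ m)) => hf.
  have -> : j.+1 = e * 2 ^ m + f.+1 by lia.
  rewrite [in X in X < _]hd !psiE // /nv; case: eqP => // _.
  rewrite ltn_pmul2r ?pow_gt0' //; lia.
have hf' : f = 2 ^ m - 1 by lia.
have -> : j.+1 = e.+1 * 2 ^ m + 0 by rewrite mulSn; lia.
rewrite [in X in X < _]hd !psiE // /nv /=; case: eqP => he.
  rewrite he /=; rewrite expn0; lia.
have -> : e.+1 - 1 = (e - 1).+1 by lia.
rewrite expnS; have := pow_gt0' (e - 1); nia.
Qed.

Lemma psi_lt m : {homo psi m : i j / i < j}.
Proof. apply: (@homo_ltn _ _ (fun a b => a < b)); [exact: ltn_trans | exact: psi_succ]. Qed.

Lemma psi_leq m i j : (psi m i <= psi m j) = (i <= j).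
Proof. exact: (leq_mono (@psi_lt m)). Qed.

Lemma psi_ltn m i j : (psi m i < psi m j) = (i < j).
Proof. by rewrite !ltnNge psi_leq. Qed.

Lemma psi_inj m : injective (psi m).
Proof. apply: incn_inj; exact: (leq_mono (@psi_lt m)). Qed.

Lemma psi0 m : psi m 0 = 0.
Proof. by rewrite psi_small // expn_gt0. Qed.

Lemma psi_pow m e : 0 < e -> psi m (e * 2 ^ m) = 2 ^ (m + e - 1).
Proof.
move=> he; rewrite -[e * _]addn0 psiE ?pow_gt0' // /nv.
case: eqP => [h|_]; first by rewrite h in he.
by rewrite addn0 -expnD; congr (_ ^ _); lia.
Qed.

Lemma psi_shift1 m j : 2 ^ m <= j -> psi m (j + 2 ^ m) = 2 * psi m j.
Proof.
move=> hj; have [hd hr] := psi_dec m j.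
set e := j %/ 2 ^ m in hd *; set f := j %% 2 ^ m in hd hr *.
have he : 0 < e by rewrite /e divn_gt0 ?pow_gt0'.
have -> : j + 2 ^ m = e.+1 * 2 ^ m + f by rewrite mulSn; lia.
rewrite [in RHS]hd !psiE // /nv /=; case: eqP => [h|_]; first by rewrite h in he.
have -> : e.+1 - 1 = (e - 1).+1 by lia.
rewrite expnS; lia.
Qed.

Lemma psi_shift m j t : 2 ^ m <= j -> psi m (j + t * 2 ^ m) = 2 ^ t * psi m j.
Proof.
move=> hj; elim: t => [|t IH]; first by rewrite mul0n addn0 expn0 mul1n.
have -> : j + t.+1 * 2 ^ m = (j + t * 2 ^ m) + 2 ^ m by rewrite mulSn; lia.
rewrite psi_shift1; last by lia.
by rewrite IH expnS mulnA.
Qed.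

Lemma psi_double m j : exists j', psi m j' = 2 * psi m j.
Proof.
case: (ltnP j (2 ^ m)) => h.
  exists (2 * j); rewrite !psi_small // expnS; lia.
by exists (j + 2 ^ m); rewrite psi_shift1.
Qed.

Lemma psi_scale m j t : exists j', psi m j' = psi m j * 2 ^ t.
Proof.
elim: t j => [|t IH] j; first by exists j; rewrite expn0 muln1.
have [j1 h1] := psi_double m j.
have [j2 h2] := IH j1; exists j2; rewrite h2 h1 expnS; lia.
Qed.

Lemma psi_big m c t : 2 ^ (m + t) <= psi m c ->
  exists c', 2 ^ m <= c' /\ c = c' + t * 2 ^ m.
Proof.
move=> h.
have : psi m (t.+1 * 2 ^ m) <= psi m c by rewrite psi_pow //; rewrite (_ : m + t.+1 - 1 = m + t) //; lia.
rewrite psi_leq => hc; exists (c - t * 2 ^ m); split; last by lia.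
rewrite mulSn in hc; lia.
Qed.

Lemma psi_pred_pow m e : 2 <= e ->
  psi m (e * 2 ^ m - 1) = 2 ^ (m + e - 1) - 2 ^ (e - 2).
Proof.
move=> he.
have hp := pow_gt0' m.
have -> : e * 2 ^ m - 1 = (e - 1) * 2 ^ m + (2 ^ m - 1).
  rewrite mulnBl mul1n; have : 2 ^ m <= e * 2 ^ m by rewrite leq_pmull //; lia. lia.
rewrite psiE; last by lia.
rewrite /nv; case: eqP => [h|_]; first by lia.
have -> : e - 1 - 1 = e - 2 by lia.
have -> : 2 ^ (m + e - 1) = 2 ^ m * 2 * 2 ^ (e - 2).
  by rewrite -expnSr -expnD; congr (_ ^ _); lia.
have := pow_gt0' (e - 2); set A := 2 ^ m; set B := 2 ^ (e - 2); nia.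
Qed.

Lemma round_nat m X kw : X < psi m kw ->
  exists c, [/\ c <= kw,
    (forall j, dist X (psi m c) <= dist X (psi m j)) &
    (forall j, dist X (psi m j) = dist X (psi m c) ->
       psi m j = psi m c \/ (odd j && ~~ odd c))].
Proof.
move=> hX.
have exP : exists k, X < psi m k by exists kw.
case: (ex_minnP exP) => k hk hmin.
have k0 : 0 < k by case: k hk hmin => //; rewrite psi0.
have hlo : psi m k.-1 <= X.
  by rewrite leqNgt; apply/negP => /hmin; lia.
have hkw : k <= kw by apply: hmin.
set lo := psi m k.-1 in hlo *; set hi := psi m k in hk *.
have hsep : forall j, (j <= k.-1 /\ psi m j <= lo) \/ (k <= j /\ hi <= psi m j).
  move=> j; case: (leqP j k.-1) => h; [left | right]; split => //.
    by rewrite /lo psi_leq.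
  by lia. by rewrite /hi psi_leq; lia.
have hoddk : odd k = ~~ odd k.-1 by rewrite -{1}(prednK k0).
have injlo : forall j, psi m j = lo -> j = k.-1 by move=> j /psi_inj.
have injhi : forall j, psi m j = hi -> j = k by move=> j /psi_inj.
pose c := if X - lo < hi - X then k.-1 else if hi - X < X - lo then k
          else if odd k.-1 then k else k.-1.
exists c; split.
- rewrite /c; case: ifP => _; first lia. case: ifP => _ //. case: ifP => _ //; lia.
- move=> j; rewrite /dist; have := hsep j; rewrite /c.
  case: ifP => h1; [|case: ifP => h2; [|case: ifP => h3]]; rewrite -/lo -/hi; lia.
- move=> j; rewrite /dist; have := hsep j; rewrite /c => hs.
  case: ifP => h1; [|case: ifP => h2; [|case: ifP => h3]]; rewrite -/lo -/hi => hd.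
  + left; lia.
  + left; lia.
  + case: hs => [[_ hj]|[_ hj]]; last by left; lia.
    have /injlo -> : psi m j = lo by lia.
    by right; rewrite h3 hoddk h3.
  + case: hs => [[_ hj]|[_ hj]]; first by left; lia.
    have /injhi -> : psi m j = hi by lia.
    by right; rewrite h3 hoddk h3.
Qed.

Lemma W_props m l s i c : 0 < m -> i < 2 ^ l ->
  (forall j, dist (i * 2 ^ s) (psi m c) <= dist (i * 2 ^ s) (psi m j)) ->
  (forall j, dist (i * 2 ^ s) (psi m j) = dist (i * 2 ^ s) (psi m c) ->
       psi m j = psi m c \/ (odd j && ~~ odd c)) ->
  exists W, [/\ psi m c = W * 2 ^ s, W <= 2 ^ l, (exists j, psi m j = W),
     ((exists j, psi m j = i) -> W = i) &
     (m + 2 <= l -> i = 2 ^ l - 1 -> W = 2 ^ l)].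
Proof.
move=> hm hi N1 N2.
set X := i * 2 ^ s in N1 N2.
have hS := pow_gt0' s.
have exact : (exists j, psi m j = i) -> psi m c = X.
  case=> j hj; have [j' hj'] := psi_scale m j s.
  have := N1 j'; rewrite hj' hj /dist -/X; lia.
case: (ltnP i (2 ^ m)) => him.
  have hri : psi m i = i by rewrite psi_small // expnS; lia.
  exists i; split => //.
  - by apply: exact; exists i.
  - by apply: ltnW.
  - by exists i.
  - move=> hl hiD; rewrite hiD in him.
    have : 2 ^ (m + 2) <= 2 ^ l by rewrite leq_pexp2l.
    rewrite expnD (_ : 2 ^ 2 = 4) // => h; have := pow_gt0' m; lia.
have hml : m < l.
  exact: (@ltn_pexp2l 2 m l) (leq_ltn_trans him hi).
have hlo : psi m (s.+1 * 2 ^ m) = 2 ^ m * 2 ^ s.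
  by rewrite psi_pow // -expnD; congr (_ ^ _); lia.
have hhi : psi m ((l + s - m + 1) * 2 ^ m) = 2 ^ l * 2 ^ s.
  by rewrite psi_pow; [rewrite -expnD; congr (_ ^ _) | ]; lia.
have hX1 : 2 ^ m * 2 ^ s <= X by rewrite leq_pmul2r.
have hX2 : X < 2 ^ l * 2 ^ s by rewrite ltn_pmul2r.
have hc1 : 2 ^ m * 2 ^ s <= psi m c.
  by have := N1 (s.+1 * 2 ^ m); rewrite hlo /dist; lia.
have hc2 : psi m c <= 2 ^ l * 2 ^ s.
  by have := N1 ((l + s - m + 1) * 2 ^ m); rewrite hhi /dist; lia.
have [c' [hc' hceq]] := @psi_big m c s ltac:(by rewrite expnD).
subst c.
rewrite psi_shift // in hc1 hc2 exact *.
exists (psi m c'); split.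
- by rewrite mulnC.
- by rewrite -(@leq_pmul2l (2 ^ s)) // [X in _ <= X]mulnC.
- by exists c'.
- move=> /exact; rewrite /X => h; apply/eqP; rewrite -(eqn_pmul2r hS) -h mulnC //.
move=> hl hiD.
set cD := (l + s - m + 1) * 2 ^ m.
have heD : 2 <= l + s - m + 1 by lia.
have hpc1 : psi m (cD - 1) = 2 ^ l * 2 ^ s - 2 ^ (l - m - 1) * 2 ^ s.
  rewrite /cD psi_pred_pow // -!expnD; congr (_ - _); congr (_ ^ _); lia.
case: (leqP cD (c' + s * 2 ^ m)) => hcc.
  have : psi m cD <= psi m (c' + s * 2 ^ m) by rewrite psi_leq.
  rewrite hhi psi_shift // => h.
  by apply/eqP; rewrite -(@eqn_pmul2l (2 ^ s)) // [X in _ == X]mulnC; apply/eqP; lia.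
have hle : psi m (c' + s * 2 ^ m) <= psi m (cD - 1) by rewrite psi_leq; lia.
rewrite psi_shift // hpc1 in hle.
have hd1 := N1 cD; rewrite hhi psi_shift // /dist in hd1.
have hX : X = 2 ^ l * 2 ^ s - 2 ^ s by rewrite /X hiD mulnBl mul1n.
have hu : 2 <= 2 ^ (l - m - 1).
  by apply: (@leq_trans (2 ^ 1)) => //; rewrite leq_pexp2l //; lia.
have hl2 : 2 ^ l = 2 ^ (l - m - 1) * 2 ^ m.+1.
  by rewrite -expnD; congr (_ ^ _); lia.
have hm2 : 2 <= 2 ^ m.+1 by apply: (@leq_trans (2 ^ 1)) => //; rewrite leq_pexp2l.
have hT : 2 ^ s <= 2 ^ l * 2 ^ s by rewrite leq_pmull // pow_gt0'.
case: (leqP 3 (2 ^ (l - m - 1))) => h3.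
  exfalso.
  have h3S : 3 * 2 ^ s <= 2 ^ (l - m - 1) * 2 ^ s by rewrite leq_pmul2r.
  move: hd1 hle h3S hT; rewrite hX.
  set A := 2 ^ (l - m - 1) * 2 ^ s; set T := 2 ^ l * 2 ^ s; set Y := 2 ^ s * psi m c'.
  set S := 2 ^ s. lia.
have hA : 2 ^ (l - m - 1) = 2 by lia.
rewrite hA in hle hpc1.
have heq : psi m (c' + s * 2 ^ m) = psi m (cD - 1).
  rewrite psi_shift // hpc1; move: hd1 hle hT; rewrite hX.
  set T := 2 ^ l * 2 ^ s; set Y := 2 ^ s * psi m c'; set S := 2 ^ s. lia.
have hdd : dist X (psi m cD) = dist X (psi m (c' + s * 2 ^ m)).
  rewrite heq hhi hpc1 /dist hX; move: hT.
  set T := 2 ^ l * 2 ^ s; set S := 2 ^ s. lia.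
case: (N2 _ hdd) => [h|/andP [_]].
  by move: h; rewrite heq => /psi_inj; lia.
have /psi_inj -> := heq.
have hcD0 : 0 < cD by rewrite /cD muln_gt0 pow_gt0'; lia.
have hoD : odd cD = false.
  rewrite /cD oddM oddX; case: (m) hm => // m' _ /=; by rewrite andbF.
move: hoD; rewrite -(prednK hcD0) /= => /negbFE ho1.
by rewrite subn1 ho1.
Qed.

Lemma count_image (T : eqType) m l (g h : nat -> T) : 0 < m -> injective h ->
  (forall i, i < 2 ^ l -> exists W, [/\ g i = h W, W <= 2 ^ l, (exists j, psi m j = W),
     ((exists j, psi m j = i) -> W = i) &
     (m + 2 <= l -> i = 2 ^ l - 1 -> W = 2 ^ l)]) ->
  size (undup [seq g i | i <- iota 0 (2 ^ l)]) =
    (if l <= m.+1 then 2 ^ l else 2 ^ m * (l - m + 1) + 1).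
Proof.
move=> hm hinj hg.
set N := (if l <= m.+1 then 2 ^ l else 2 ^ m * (l - m + 1) + 1).
have hinj2 : injective (h \o psi m) by apply: inj_comp => //; exact: psi_inj.
have hp : forall j, j < 2 ^ m.+1 -> psi m j = j by move=> j; exact: psi_small.
have htop : m + 2 <= l -> psi m (2 ^ m * (l - m + 1)) = 2 ^ l.
  by move=> hl; rewrite mulnC psi_pow; [congr (_ ^ _)|]; lia.
have hlm : l <= m.+1 -> 2 ^ l <= 2 ^ m.+1 by move=> hl; rewrite leq_pexp2l.
rewrite -(size_iota 0 N) -(size_map (h \o psi m)).
apply: perm_size; apply: uniq_perm; first exact: undup_uniq.
  by rewrite map_inj_uniq // iota_uniq.
move=> y; rewrite mem_undup; apply/mapP/mapP => [[i hi ->]|[j hj ->]].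
  rewrite mem_iota add0n in hi; case/andP: hi => _ hi.
  have [W [-> hW [j hj] hex hD]] := hg i hi.
  rewrite /N; case: ifP => hl.
    exists i; [by rewrite mem_iota; lia|].
    by rewrite /= hp ?hex //; [exists i; apply: hp|]; have := hlm hl; lia.
  exists j; last by rewrite /= hj.
  rewrite mem_iota add0n leq0n /=.
  have : psi m j <= psi m (2 ^ m * (l - m + 1)) by rewrite htop ?hj //; lia.
  by rewrite psi_leq; lia.
rewrite mem_iota add0n in hj; case/andP: hj => _ hj.
move: hj; rewrite /N; case: ifP => hl hj.
  have hjm : j < 2 ^ m.+1 by have := hlm hl; lia.
  exists j; [by rewrite mem_iota; lia|].
  have [W [-> _ _ hex _]] := hg j hj.
  by rewrite /= hp // hex //; exists j; apply: hp.
case: (ltnP j (2 ^ m * (l - m + 1))) => hj'.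
  have hpj : psi m j < 2 ^ l by rewrite -htop; [rewrite psi_ltn|lia].
  exists (psi m j); [by rewrite mem_iota; lia|].
  have [W [-> _ _ hex _]] := hg _ hpj.
  by rewrite hex //; exists j.
have hjN : j = 2 ^ m * (l - m + 1) by lia.
have hl2 : 0 < 2 ^ l by apply: pow_gt0'.
exists (2 ^ l - 1); [by rewrite mem_iota; lia|].
have [W [-> _ _ _ hD]] := hg (2 ^ l - 1) ltac:(lia).
have hl3 : m + 2 <= l by move/negbT: hl; rewrite -ltnNge; lia.
by rewrite hD // /= hjN htop.
Qed.

Unset Implicit Arguments.

Import Order.TTheory GRing.Theory Num.Theory.
Local Open Scope ring_scope.

Lemma mem_reps E m r : (r \in reps E m) = (r.1.2 < 2 ^ E - 1)%N && (r.2 < 2 ^ m)%N.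
Proof.
rewrite /reps; apply/idP/andP.
  move=> /allpairsP [[[s e] f]] [hse hf ->].
  case/allpairsP: hse => [[s' e']] [_ he [-> ->]] /=.
  by move: he hf; rewrite !mem_iota /=; lia.
case: r => [[s e] f] /= [he hf]; apply/allpairsP; exists ((s, e), f); split => //.
  case: (s) => /=; rewrite mem_cat; apply/orP; [right; rewrite mem_cat; apply/orP; left|left]; apply: map_f; rewrite mem_iota; lia.
by rewrite /= mem_iota; lia.
Qed.

Lemma fvalE (R : realType) E m s e f : (1 <= bias E)%N ->
  fval R E m (s, e, f) = (-1) ^+ s * (nv m e f)%:R / 2 ^+ (m + bias E - 1).
Proof.
move=> hb; rewrite /fval /nv.
have hP : (2 : R) ^+ (m + bias E - 1) * 2 = 2 ^+ m * 2 ^+ bias E.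
  by rewrite -exprSr -exprD; congr (_ ^+ _); lia.
have h2 : (2 : R) != 0 by rewrite pnatr_eq0.
have hm : (2 : R) ^+ m != 0 by rewrite expf_neq0.
have hb' : (2 : R) ^+ bias E != 0 by rewrite expf_neq0.
have hP0 : (2 : R) ^+ (m + bias E - 1) != 0 by rewrite expf_neq0.
have hb2 : (2 : R) ^+ bias E = 2 ^+ (m + bias E - 1) * 2 / 2 ^+ m.
  by rewrite hP mulrAC mulfV // mul1r.
rewrite hb2.
case: eqP => he.
  by field; rewrite ?hP0 ?hm ?h2 ?expf_neq0 ?andbT ?pnatr_eq0.
case: e he => // e _.
rewrite subSS subn0 natrM natrD !natrX exprS.
by field; rewrite ?hP0 ?hm ?h2 ?expf_neq0 ?andbT ?pnatr_eq0.
Qed.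

Definition dd (X : nat) (s : bool) (n : nat) : nat := if s then (X + n)%N else dist X n.

Lemma normd (R : realType) (a c : nat) : `|a%:R - c%:R : R| = (dist a c)%:R.
Proof.
rewrite /dist; case: (leqP c a) => h.
  have -> : (c - a = 0)%N by apply/eqP; rewrite subn_eq0.
  rewrite addn0 (natrB _ h) ger0_norm; first by [].
  by rewrite subr_ge0 ler_nat.
have -> : (a - c = 0)%N by apply/eqP; rewrite subn_eq0 ltnW.
rewrite add0n distrC (natrB _ (ltnW h)) ger0_norm; first by [].
by rewrite subr_ge0 ler_nat ltnW.
Qed.

Lemma odd_modp m c : (0 < m)%N -> odd (c %% 2 ^ m) = odd c.
Proof.
move=> hm; rewrite [in RHS](divn_eq c (2 ^ m)) oddD oddM oddX.
by case: m hm => // m _ /=; rewrite andbF.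
Qed.

Lemma odd_idx m e f : (0 < m)%N -> odd (e * 2 ^ m + f) = odd f.
Proof. by move=> hm; rewrite oddD oddM oddX; case: m hm => // m _ /=; rewrite andbF. Qed.

Lemma fl_round (R : realType) E m X : (0 < m)%N -> (1 <= bias E)%N -> (0 < E)%N ->
  (X < 2 ^ (m + 2 * bias E - 1))%N ->
  exists c, [/\ fl R E m (X%:R / 2 ^+ (m + bias E - 1)) =
                 ((psi m c)%:R / 2 ^+ (m + bias E - 1))%:E,
   (forall j, dist X (psi m c) <= dist X (psi m j))%N &
   (forall j, dist X (psi m j) = dist X (psi m c) ->
        psi m j = psi m c \/ (odd j && ~~ odd c))].
Proof.
move=> hm hb hE hX.
set b := bias E in hb hX *.
have hE1 : (2 ^ E - 1 = 2 * b + 1)%N.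
  rewrite /b /bias; have -> : E = (E - 1).+1 by lia.
  rewrite expnS subSS subn0; have := pow_gt0' (E - 1); lia.
set P : R := 2 ^+ (m + b - 1).
have hP : 0 < P by rewrite exprn_gt0.
have hP0 : P != 0 by rewrite gt_eqF.
pose kw := (2 * b * 2 ^ m)%N.
have hkw : psi m kw = (2 ^ (m + 2 * b - 1))%N by rewrite psi_pow //; lia.
have [c [hckw N1 N2]] := @round_nat m X kw ltac:(by rewrite hkw).
exists c; split => //.
pose rc : frep := (false, c %/ 2 ^ m, c %% 2 ^ m)%N.
have hrc : rc \in reps E m.
  rewrite mem_reps /= ltn_pmod ?pow_gt0' // andbT hE1 ltn_divLR ?pow_gt0' //.
  rewrite /kw in hckw; lia.
have fvalc : fval R E m rc = (psi m c)%:R / P by rewrite /rc fvalE // expr0 mul1r.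
set x : R := X%:R / P.
have hd : forall s e f, `|x - fval R E m (s, e, f)| = (dd X s (nv m e f))%:R / P.
  move=> s e f; rewrite fvalE // -/b -/P /x -mulrBl normrM [`|P^-1|]ger0_norm ?invr_ge0 ?ltW //.
  congr (_ * _); case: s => /=; rewrite ?expr0 ?mul1r ?normd //.
  by rewrite expr1 mulN1r opprK -natrD ger0_norm.
have cmp : forall a a' : nat, (a%:R / P <= a'%:R / P) = (a <= a')%N.
  by move=> a a'; rewrite ler_pM2r ?invr_gt0 // ler_nat.
have eqc : forall a a' : nat, (a%:R / P == a'%:R / P) = (a == a')%N.
  move=> a a'; apply/eqP/eqP => [h|->//].
  by apply/eqP; rewrite -(eqr_nat R); apply/eqP; apply: (mulIf (invr_neq0 hP0)).
have Nd0 : (dist X (psi m c) <= X)%N.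
  by have := N1 0%N; rewrite psi0 /dist; lia.
have d0 : dist X 0 = X by rewrite /dist; lia.
have hdc : `|x - fval R E m rc| = (dist X (psi m c))%:R / P by rewrite hd.
have okc : rne_ok R E m x rc.
  apply/andP; split; apply/allP => [[[s' e'] f']]; rewrite mem_reps => /andP [he' hf']; rewrite /= in he' hf';
    rewrite hdc hd ?cmp ?eqc -(psiE m e') //.
    by case: s' => /=; [lia | apply: N1].
  have hev : even_last rc = ~~ odd c by rewrite /even_last /= odd_modp.
  apply/implyP; rewrite hev fvalc fvalE // -/b -/P.
  case: s' => /eqP; rewrite /dd => hdd.
    have hdd' : dist X (psi m 0) = dist X (psi m c) by rewrite psi0 d0; lia.
    case: (N2 _ hdd') => [h|/andP [] //].
    have hn : nv m e' f' = 0%N by rewrite -psiE //; lia.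
    by rewrite hn -h psi0 mulr0 !mul0r eqxx.
  case: (N2 _ hdd) => [h|/andP [_ ->]]; last by rewrite orbT.
  by rewrite expr0 mul1r -psiE // h eqxx.
have hhas : has (rne_ok R E m x) (reps E m) by apply/hasP; exists rc.
have [[[s e] f] [hr hrin' ->]] : exists r, [/\ rne_ok R E m x r, r \in reps E m &
     fl R E m x = (fval R E m r)%:E].
  exists (nth (false, 0%N, 0%N) (reps E m) (find (rne_ok R E m x) (reps E m))).
  split; first exact: nth_find.
    by apply: mem_nth; rewrite -has_find.
  rewrite /fl.
  have hx0 : 0 <= x by apply: divr_ge0; [exact: ler0n | exact: ltW].
  have hxb : x < 2 ^+ b.
    rewrite /x ltr_pdivrMr // /P -exprD -natrX ltr_nat.
    by rewrite (_ : (b + (m + b - 1)) = m + 2 * b - 1)%N //; lia.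
  have hov : 2 ^+ b <= ovf_thr R E m.
    rewrite /ovf_thr -{1}[2 ^+ b]mul1r ler_pM2r ?exprn_gt0 //.
    have hy : (2 : R) ^- m.+1 <= 1 by rewrite invf_le1 ?exprn_gt0 // exprn_ege1 // ler1n.
    lra.
  have -> : (ovf_thr R E m <= x) = false by apply/negbTE; rewrite -ltNge; exact: lt_le_trans hxb hov.
  have -> : (x <= - ovf_thr R E m) = false.
    apply/negbTE; rewrite -ltNge; apply: lt_le_trans _ hx0.
    by rewrite oppr_lt0; apply: lt_le_trans hov; rewrite exprn_gt0.
  by rewrite -has_find hhas.
congr EFin.
have hrin := hrin'; move: hrin'; rewrite mem_reps => /andP [he hf]; rewrite /= in he hf.
case/andP: hr => /allP h1 /allP h2.
have := h1 rc hrc; rewrite hdc hd cmp => hle.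
case/andP: okc => /allP k1 _.
have := k1 _ hrin; rewrite hdc hd cmp => hge.
case: s hle hge h1 h2 hrin => hle hge _ h2 hrin; rewrite /dd /= in hle hge.
  have hn0 : nv m e f = 0%N by lia.
  have hdd' : dist X (psi m 0) = dist X (psi m c) by rewrite psi0 d0; lia.
  case: (N2 _ hdd') => [h|/andP [] //].
  by rewrite fvalE // hn0 -h psi0 mulr0 !mul0r.
rewrite -(psiE m e) // in hle hge.
have hdd : dist X (psi m (e * 2 ^ m + f)) = dist X (psi m c) by lia.
case: (N2 _ hdd) => [h|/andP [ho _]].
  by rewrite fvalE // -/b -/P expr0 mul1r -psiE // h.
have := h2 rc hrc; rewrite hdc hd eqc /dd -(psiE m e) // hdd eqxx /=.
rewrite /even_last -(@odd_idx m e f hm) ho orbF => /eqP <-.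
exact: fvalc.
Qed.

Lemma fl_exact (R : realType) E m X : (0 < m)%N -> (1 <= bias E)%N -> (0 < E)%N ->
  (X < 2 ^ (m + 2 * bias E - 1))%N -> (exists j, psi m j = X) ->
  fl R E m (X%:R / 2 ^+ (m + bias E - 1)) = (X%:R / 2 ^+ (m + bias E - 1))%:E.
Proof.
move=> hm hb hE hX [j hj].
have [c [-> N1 _]] := @fl_round R E m X hm hb hE hX.
have := N1 j; rewrite hj /dist subnn addn0 => h.
by have -> : psi m c = X by lia.
Qed.

Lemma size_fmt01 (R : realType) E m : (0 < m)%N -> (1 <= bias E)%N -> (0 < E)%N ->
  size (fmt01 R E m) = (2 ^ m * (2 ^ (E - 1) - 1) + 1)%N.
Proof.
move=> hm hb hE.
set b := bias E in hb.
have hE1 : (2 ^ E - 1 = 2 * b + 1)%N.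
  rewrite /b /bias; have -> : E = (E - 1).+1 by lia.
  rewrite expnS subSS subn0; have := pow_gt0' (E - 1); lia.
set P : R := 2 ^+ (m + b - 1).
have hP : 0 < P by rewrite exprn_gt0.
have hP0 : P != 0 by rewrite gt_eqF.
have hPn : P = (2 ^ (m + b - 1))%:R by rewrite natrX.
have htop : psi m (b * 2 ^ m) = (2 ^ (m + b - 1))%N by rewrite psi_pow.
pose g := fun j => (psi m j)%:R / P.
have ginj : injective g.
  move=> a c; rewrite /g => h; apply: (@psi_inj m); apply/eqP; rewrite -(eqr_nat R).
  by apply/eqP; apply: (mulIf (invr_neq0 hP0)).
suff -> : size (fmt01 R E m) = size (map g (iota 0 (b * 2 ^ m + 1))).
  by rewrite size_map size_iota /b /bias; lia.
apply: perm_size; apply: uniq_perm; first exact: undup_uniq.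
  by rewrite map_inj_uniq // iota_uniq.
move=> y; rewrite mem_undup mem_filter; apply/andP/mapP.
  case=> /andP [hy0 hy1] /mapP [[[s e] f] hr hyeq]; subst y; move: hr hy0 hy1.
  rewrite mem_reps => /andP [he hf]; rewrite /= in he hf.
  rewrite fvalE // -/b -/P -(psiE m e) //.
  case: s => hy0 hy1.
    exists 0%N; first by rewrite mem_iota; lia.
    move: hy0; rewrite expr1 mulN1r ler_pdivlMr // mul0r oppr_ge0 lern0 => /eqP ->.
    by rewrite /g psi0 !mulr0n oppr0.
  exists (e * 2 ^ m + f)%N; last by rewrite /g expr0 mul1r.
  move: hy1; rewrite expr0 mul1r ler_pdivrMr // mul1r hPn ler_nat -htop psi_leq.
  by rewrite mem_iota; lia.
case=> j; rewrite mem_iota add0n => /andP [_ hj] ->; split.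
  rewrite /g; apply/andP; split; first by apply: divr_ge0; [exact: ler0n | exact: ltW].
  by rewrite ler_pdivrMr // mul1r hPn ler_nat -htop psi_leq; lia.
apply/mapP; exists (false, j %/ 2 ^ m, j %% 2 ^ m)%N.
  rewrite mem_reps /= ltn_pmod ?pow_gt0' // andbT hE1 ltn_divLR ?pow_gt0' //; lia.
by rewrite fvalE // expr0 mul1r.
Qed.

Theorem propositionB1 (R : realType) (E m l : nat) :
  (0 < E)%N -> (0 < m)%N -> (l + 2 <= 2 ^ (E - 1))%N ->
  let denom : R := (size (fmt01 R E m))%:R in
  let target : R :=
    if (l <= m.+1)%N then
      (2 ^ l)%:R / (2 ^ m * (2 ^ (E - 1) - 1) + 1)%:R
    else
      (2 ^ m * (l - m + 1) + 1)%:R / (2 ^ m * (2 ^ (E - 1) - 1) + 1)%:R in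
  let S1 := undup [seq fl R E m (i%:R / 2 ^+ l) | i <- iota 0 (2 ^ l)] in
  let S2 := undup [seq fdiv R E m (fl R E m i%:R) (fl R E m (2 ^+ l))
                  | i <- iota 0 (2 ^ l)] in
  (size S1)%:R / denom = target /\ (size S2)%:R / denom = target.
Proof.
move=> hE hm hl denom target S1 S2.
have hb : (l + 1 <= bias E)%N by rewrite /bias; lia.
have hb1 : (1 <= bias E)%N by lia.
have hden : denom = (2 ^ m * (2 ^ (E - 1) - 1) + 1)%:R by rewrite /denom size_fmt01.
set b := bias E in hb hb1.
set K := (m + b - 1 - l)%N.
set P : R := 2 ^+ (m + b - 1).
have hP : 0 < P by rewrite exprn_gt0.
have hP0 : P != 0 by rewrite gt_eqF.
have hKl : (K + l = m + b - 1)%N by rewrite /K; lia.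
have hPKl : P = 2 ^+ K * 2 ^+ l by rewrite -exprD hKl.
have h2l : (2 : R) ^+ l != 0 by rewrite expf_neq0 // pnatr_eq0.
have h2K : (2 : R) ^+ K != 0 by rewrite expf_neq0 // pnatr_eq0.
pose h := fun W : nat => (((W * 2 ^ K)%N)%:R / P)%:E : \bar R.
have hinj : injective h.
  move=> a c [] /(mulIf (invr_neq0 hP0)) /eqP; rewrite eqr_nat eqn_pmul2r ?pow_gt0' //.
  by move/eqP.
have hx : forall i : nat, i%:R / 2 ^+ l = ((i * 2 ^ K)%N)%:R / P :> R.
  by move=> i; rewrite natrM natrX hPKl; field; rewrite h2l h2K.
have hbig : forall t, (t < m + 2 * b - 1)%N -> (2 ^ t < 2 ^ (m + 2 * b - 1))%N.
  by move=> t ht; rewrite ltn_exp2l //; lia.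
have hXb : forall i, (i < 2 ^ l)%N -> (i * 2 ^ K < 2 ^ (m + 2 * b - 1))%N.
  move=> i hi; apply: (@leq_trans (2 ^ (K + l))); last by apply: ltnW; apply: hbig; lia.
  by rewrite expnD mulnC ltn_pmul2l ?pow_gt0'.
have hN : forall g : nat -> \bar R,
   (forall i, (i < 2 ^ l)%N -> exists W, [/\ g i = h W, (W <= 2 ^ l)%N, (exists j, psi m j = W),
     ((exists j, psi m j = i) -> W = i) &
     ((m + 2 <= l)%N -> i = (2 ^ l - 1)%N -> (W = 2 ^ l)%N)]) ->
   (size (undup [seq g i | i <- iota 0 (2 ^ l)]))%:R / denom = target.
  move=> g hg; rewrite (@count_image _ m l g h hm hinj hg) hden /target.
  by case: ifP.
split.
  apply: hN => i hi.
  rewrite hx.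
  have [c [-> N1 N2]] := @fl_round R E m (i * 2 ^ K)%N hm hb1 hE (hXb i hi).
  have [W [hW hWl hWr hex hD]] := @W_props m l K i c hm hi N1 N2.
  by exists W; split => //; rewrite /h -hW.
have hfl2 : fl R E m (2 ^+ l) = (2 ^+ l)%:E.
  have -> : (2 : R) ^+ l = ((2 ^ (l + (m + b - 1)))%N)%:R / P.
    by rewrite natrX exprD -/P mulfK.
  rewrite fl_exact //; first by apply: hbig; lia.
  exists ((l + b) * 2 ^ m)%N; rewrite psi_pow; last by lia.
  by congr (expn _ _); lia.
apply: hN => i hi.
have hi' : i%:R = ((i * 2 ^ (m + b - 1))%N)%:R / P :> R by rewrite natrM natrX mulfK.
have hXi : (i * 2 ^ (m + b - 1) < 2 ^ (m + 2 * b - 1))%N.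
  apply: (@leq_trans (2 ^ (l + (m + b - 1)))); last by apply: ltnW; apply: hbig; lia.
  by rewrite expnD ltn_pmul2r ?pow_gt0'.
rewrite hi'.
have [c [-> N1 N2]] := @fl_round R E m (i * 2 ^ (m + b - 1))%N hm hb1 hE hXi.
have [W [hW hWl [j hj] hex hD]] := @W_props m l (m + b - 1)%N i c hm hi N1 N2.
exists W; split => //; last by exists j.
rewrite hfl2 /fdiv hW natrM natrX -/P mulfK // hx.
rewrite fl_exact //.
  apply: (@leq_ltn_trans (2 ^ (K + l))); last by apply: hbig; lia.
  by rewrite expnD mulnC leq_pmul2l ?pow_gt0'.
have [j' hj'] := psi_scale m j K.
by exists j'; rewrite hj' hj.
Qed.
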